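(* Define rooted trees $H(k)$, $k\ge 0$, recursively: $H(0)$ is a single vertex $u_0$ (its root); for $k\ge 0$, $H(k+1)$ consists of a root $u_{k+1}$ with three children $v_1,v_2,v_3$, where each $v_i$ has exactly three children, each of which is the root of a copy of $H(k)$ (all nine copies being disjoint). Then for every $k\ge 0$, $\mathrm{lmw}(H(k))=k$ and $\mathrm{lmw}(H(k)^2)=\mathrm{lmw}(H(k)^2-u_k)=2k$, where $H(k)^2-u_k$ denotes the graph obtained from $H(k)^2$ by deleting the root $u_k$.
   Context: All graphs are finite and simple. For a graph $G$, its square $G^2$ is the graph on $V(G)$ in which two distinct vertices are adjacent iff their distance in $G$ is at most $2$. For disjoint $S,T\subseteq V(G)$, $G[S,T]$ denotes the bipartite graph on $S\cup T$ whose edges are exactly the edges of $G$ with one endpoint in $S$ and the other in $T$. $\mathrm{mim}(H)$ is the maximum number of edges in an induced matching of $H$. A linear layout of an $n$-vertex graph $G$ is a bijection $\sigma:V(G)\to\{1,\dots,n\}$; write $v_i=\sigma^{-1}(i)$ and $V_i^\sigma=\{v_1,\dots,v_i\}$, $\overline{V_i^\sigma}=V(G)\setminus V_i^\sigma$. The MIM-width of $G$ under $\sigma$ is $\mathrm{mw}(\sigma,G)=\max_{1\le i<n}\mathrm{mim}(G[V_i^\sigma,\overline{V_i^\sigma}])$ (equal to $0$ if $n\le 1$, including the empty graph). The linear MIM-width $\mathrm{lmw}(G)$ is the minimum of $\mathrm{mw}(\sigma,G)$ over all linear layouts $\sigma$ of $G$ (and is $0$ for the empty graph). *)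

(* Defs.v *)
(* Graphs: a simple graph is an irreflexive symmetric
   relation e : rel T on a finite type T (its vertex set). *)
From mathcomp Require Import all_boot.
Set Implicit Arguments. Unset Strict Implicit. Unset Printing Implicit Defensive.

Definition sq_graph (T : finType) (e : rel T) : rel T :=
  fun x y => (x != y) && (e x y || [exists z, e x z && e z y]).

Definition del_vertex (T : finType) (e : rel T) (r : T) : rel {x : T | x != r} :=
  fun x y => e (val x) (val y).
Arguments del_vertex [T] e r _ _.

(* A set M of pairs (a,b) is an induced matching of G[S, V\S] iff every pair is
   an edge of G with a in S and b notin S, distinct pairs share no endpoint,
   and there is no edge of G[S,V\S] between endpoints of distinct pairs
   (the only possible such edges are a--b' and a'--b, since G[S,V\S] has no
   edges inside S or inside V\S). *)
Definition induced_matching (T : finType) (e : rel T) (S : {set T})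
  (M : {set T * T}) : bool :=
  [forall p in M, [&& p.1 \in S, p.2 \notin S & e p.1 p.2]] &&
  [forall p in M, forall q in M, (p != q) ==>
     [&& p.1 != q.1, p.2 != q.2, ~~ e p.1 q.2 & ~~ e q.1 p.2]].

Definition mim_cut (T : finType) (e : rel T) (S : {set T}) : nat :=
  \max_(M : {set T * T} | induced_matching e S M) #|M|.

(* A linear layout is a bijection sigma : V -> {1..n}; we use positions
   'I_n = {0..n-1} (sigma x = i-1 here means position i), so
   V_i = {x | sigma x < i}. *)
Definition layout (T : finType) (s : {ffun T -> 'I_#|T|}) : bool := injectiveb s.

Definition prefix_set (T : finType) (s : {ffun T -> 'I_#|T|}) (i : nat) : {set T} :=
  [set x | (s x < i)%N].

Definition mim_width (T : finType) (e : rel T) (s : {ffun T -> 'I_#|T|}) : nat :=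
  \max_(i < #|T| | (0 < i)%N) mim_cut e (prefix_set s i).

(* lmw(G) = min over all linear layouts of mw(sigma,G).  The seed #|T| of the
   min is harmless: a layout always exists and mim <= #|T|. For the empty
   graph this gives 0. *)
Definition lmw (T : finType) (e : rel T) : nat :=
  \big[minn/#|T|]_(s : {ffun T -> 'I_#|T|} | layout s) mim_width e s.

(* Vertices of H(k+1):  None                    = root u_{k+1}
                        Some (i, None)          = child v_i (i < 3)
                        Some (i, Some (j, x))   = vertex x of the j-th copy of
                                                  H(k) hanging below v_i.   *)
Fixpoint Hv (k : nat) : finType :=
  match k with
  | 0 => unit
  | k'.+1 => option ('I_3 * option ('I_3 * Hv k'))%type
  end.

Fixpoint Hroot (k : nat) : Hv k :=
  match k return Hv k with
  | 0 => tt
  | k'.+1 => None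
  end.

Fixpoint Hadj (k : nat) : rel (Hv k) :=
  match k return rel (Hv k) with
  | 0 => fun _ _ => false
  | k'.+1 => fun x y =>
    match x, y with
    | None, Some (_, None) => true
    | Some (_, None), None => true
    | Some (i, None), Some (i', Some (_, z)) => (i == i') && (z == Hroot k')
    | Some (i', Some (_, z)), Some (i, None) => (i == i') && (z == Hroot k')
    | Some (i, Some (j, z)), Some (i', Some (j', z')) =>
        [&& i == i', j == j' & Hadj z z']
    | _, _ => false
    end
  end.

(* Main.v *)
Require Import Defs.
From mathcomp Require Import all_boot zify.
Set Implicit Arguments. Unset Strict Implicit. Unset Printing Implicit Defensive.

Section Gen.
Variable T : finType.
Variable e : rel T.

Definition conflict (p q : T * T) :=
  [|| p.1 == q.1, p.2 == q.2, e p.1 q.2 | e q.1 p.2].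

Lemma induced_noconf S M p q : induced_matching e S M -> p \in M -> q \in M ->
  p != q -> ~~ conflict p q.
Proof.
case/andP=> _ /forallP H pM qM npq.
move: (H p); rewrite pM /= => /forallP /(_ q); rewrite qM npq /=.
case/and4P=> h1 h2 h3 h4.
by rewrite /conflict negb_or (negbTE h1) negb_or (negbTE h2) negb_or h3 h4.
Qed.

Lemma induced_edge S M p : induced_matching e S M -> p \in M ->
  [/\ p.1 \in S, p.2 \notin S & e p.1 p.2].
Proof.
case/andP=> /forallP H _ pM. move: (H p); rewrite pM /=. by case/and3P.
Qed.

Lemma mim_ge S M : induced_matching e S M -> #|M| <= mim_cut e S.
Proof. move=> H. rewrite /mim_cut. by apply: (leq_bigmax_cond (F := fun M : {set T * T} => #|M|)). Qed.

Lemma mim_le S K : (forall M, induced_matching e S M -> #|M| <= K) -> mim_cut e S <= K.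
Proof. move=> H. rewrite /mim_cut. by apply/bigmax_leqP. Qed.

Definition crit (s : T -> nat) m (X : {set T}) t :=
  exists M, [/\ induced_matching e [set x | s x < t] M, #|M| = m &
     forall p, p \in M -> (p.1 \in X) && (p.2 \in X)].

Definition Q m (X : {set T}) := forall s : T -> nat, injective s -> exists t, crit s m X t.

Definition conn (Y : {set T}) := forall S : {set T},
  (exists2 a, a \in Y & a \in S) -> (exists2 b, b \in Y & b \notin S) ->
  exists a b, [/\ a \in Y, b \in Y, a \in S, b \notin S & e a b].

Lemma crit_span s m (X : {set T}) t : crit s m X t -> 0 < m ->
  exists a b, [/\ a \in X, b \in X, s a < t & t <= s b].
Proof.
case=> M [HM cM HX] m0.
have : (0 < #|M|) by rewrite cM.
case/card_gt0P=> p pM.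
case: (induced_edge HM pM); rewrite !inE -leqNgt => h1 h2 _.
case/andP: (HX p pM) => x1 x2.
by exists p.1, p.2.
Qed.

Lemma crit_mono s m (X Y : {set T}) t : X \subset Y -> crit s m X t -> crit s m Y t.
Proof.
move=> /subsetP sXY [M [HM cM HX]]; exists M; split=> // p pM.
by case/andP: (HX p pM) => /sXY -> /sXY ->.
Qed.

Lemma step1 s m (X Y : {set T}) t : crit s m X t -> conn Y ->
  (exists2 a, a \in Y & s a < t) -> (exists2 b, b \in Y & t <= s b) ->
  (forall x y, x \in X -> y \in Y -> [&& x != y, ~~ e x y & ~~ e y x]) ->
  crit s m.+1 (X :|: Y) t.
Proof.
move=> [M [HM cM HX]] cY [a0 a0Y a0t] [b0 b0Y b0t] Hfar.
set S := [set x | s x < t].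
case: (cY S).
  by exists a0 => //; rewrite inE.
  by exists b0 => //; rewrite inE -leqNgt.
move=> a [b [aY bY aS bS eab]].
have Hq q : q \in M -> [&& q.1 != a, q.2 != b, ~~ e q.1 b & ~~ e a q.2].
  move=> qM; case/andP: (HX q qM) => q1 q2.
  case/and3P: (Hfar _ _ q1 aY) => -> _ _.
  case/and3P: (Hfar _ _ q2 bY) => -> _ _.
  case/and3P: (Hfar _ _ q1 bY) => _ -> _.
  by case/and3P: (Hfar _ _ q2 aY) => _ _ ->.
have abM : (a, b) \notin M.
  apply/negP => /Hq /=. by rewrite eqxx.
exists ((a, b) |: M); split.
- case/andP: HM => /forallP H1 /forallP H2.
  apply/andP; split.
    apply/forallP => p; apply/implyP; rewrite in_setU1.
    case/orP => [/eqP -> /=|pM]; first by rewrite aS bS eab.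
    by move: (H1 p); rewrite pM.
  apply/forallP => p; apply/implyP; rewrite in_setU1 => Hp.
  apply/forallP => q; apply/implyP; rewrite in_setU1 => Hq'.
  apply/implyP => npq.
  case/orP: Hp => [/eqP Ep|pM]; case/orP: Hq' => [/eqP Eq|qM].
  + by rewrite Ep Eq eqxx in npq.
  + case/and4P: (Hq q qM) => h1 h2 h3 h4.
    by rewrite Ep /= eq_sym h1 eq_sym h2 h4 h3.
  + case/and4P: (Hq p pM) => h1 h2 h3 h4.
    by rewrite Eq /= h1 h2 h3 h4.
  + move: (H2 p); rewrite pM /= => /forallP /(_ q).
    by rewrite qM npq.
- by rewrite cardsU1 abM cM.
- move=> p; rewrite in_setU1; case/orP => [/eqP -> /=|pM].
    by rewrite !in_setU aY bY !orbT.
  by case/andP: (HX p pM) => h1 h2; rewrite !in_setU h1 h2.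
Qed.

Lemma conn1 x : conn [set x].
Proof.
move=> S [a] /set1P -> aS [b] /set1P -> bS. by rewrite aS in bS.
Qed.

Hypothesis esym : symmetric e.

Lemma connU A B x y : conn A -> conn B -> x \in A -> y \in B -> e x y -> conn (A :|: B).
Proof.
move=> cA cB xA yB exy S [a aAB aS] [b bAB bS].
case: (boolP [exists z, (z \in A) && (z \notin S)]) => [/existsP [z /andP [zA zS]]|nA].
  case: (boolP [exists z, (z \in A) && (z \in S)]) => [/existsP [w /andP [wA wS]]|nA'].
    case: (cA S); [by exists w|by exists z|].
    move=> c [d [cA' dA cS dS ecd]]; exists c, d; by rewrite !in_setU cA' dA.
  case: (boolP [exists z, (z \in B) && (z \notin S)]) => [/existsP [w /andP [wB wS]]|nB].
    case: (boolP (a \in A)) => aA.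
      by move: nA'; rewrite negb_exists => /forallP /(_ a); rewrite aA aS.
    have aB : a \in B by move: aAB; rewrite in_setU (negbTE aA).
    case: (cB S); [by exists a|by exists w|].
    move=> c [d [cB' dB cS dS ecd]]; exists c, d; by rewrite !in_setU cB' dB !orbT.
  have yS : y \in S.
    by move: nB; rewrite negb_exists => /forallP /(_ y); rewrite yB /= negbK.
  have xS : x \notin S.
    by move: nA'; rewrite negb_exists => /forallP /(_ x); rewrite xA.
  exists y, x; split=> //; rewrite ?in_setU ?xA ?yB ?orbT //. by rewrite esym.
have HA z : z \in A -> z \in S.
  by move=> zA; move: nA; rewrite negb_exists => /forallP /(_ z); rewrite zA /= negbK.
have bB : b \in B.
  by move: bAB; rewrite in_setU; case/orP => // /HA; rewrite (negbTE bS).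
case: (boolP [exists z, (z \in B) && (z \in S)]) => [/existsP [w /andP [wB wS]]|nB].
  case: (cB S); [by exists w|by exists b|].
  move=> c [d [cB' dB cS dS ecd]]; exists c, d; by rewrite !in_setU cB' dB !orbT.
have yS : y \notin S.
  by move: nB; rewrite negb_exists => /forallP /(_ y); rewrite yB.
exists x, y; split=> //; rewrite ?in_setU ?xA ?yB ?orbT //. exact: HA.
Qed.

End Gen.

Lemma conn_mono (T : finType) (e e' : rel T) Y :
  (forall x y, e x y -> e' x y) -> conn e Y -> conn e' Y.
Proof.
move=> H cY S h1 h2; case: (cY S h1 h2) => a [b [? ? ? ? ?]].
exists a, b; split=> //; exact: H.
Qed.

Lemma conn_imset (U T : finType) (eU : rel U) (eT : rel T) (f : U -> T) Y :
  (forall x y, eU x y -> eT (f x) (f y)) -> conn eU Y -> conn eT (f @: Y).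
Proof.
move=> H cY S [a /imsetP [a0 a0Y ->] aS] [b /imsetP [b0 b0Y ->] bS].
case: (cY (f @^-1: S)).
  by exists a0; rewrite // inE.
  by exists b0; rewrite // inE.
move=> c [d [cY' dY cS dS ecd]].
exists (f c), (f d); split; rewrite ?imset_f //.
  by move: cS; rewrite inE.
  by move: dS; rewrite inE.
exact: H.
Qed.

Section Transfer.
Variables (U T : finType) (eU : rel U) (eT : rel T) (f : U -> T).
Hypothesis finj : injective f.
Hypothesis fe : forall x y, eT (f x) (f y) = eU x y.

Definition fpair (p : U * U) : T * T := (f p.1, f p.2).
Lemma fpair_inj : injective fpair.
Proof. by move=> [a b] [c d] [/finj -> /finj ->]. Qed.

Lemma match_image (SU : {set U}) (ST : {set T}) (M : {set U * U}) :
  (forall x, (f x \in ST) = (x \in SU)) -> induced_matching eU SU M ->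
  induced_matching eT ST (fpair @: M) /\ #|fpair @: M| = #|M|.
Proof.
move=> HS /andP [/forallP H1 /forallP H2]; split; last exact: card_imset fpair_inj.
apply/andP; split.
  apply/forallP => q; apply/implyP => /imsetP [p pM ->] /=.
  by move: (H1 p); rewrite pM /= !HS fe.
apply/forallP => q; apply/implyP => /imsetP [p pM ->].
apply/forallP => q'; apply/implyP => /imsetP [p' pM' ->].
apply/implyP => npp.
have npp' : p != p' by apply: contraNneq npp => ->.
move: (H2 p); rewrite pM /= => /forallP /(_ p'); rewrite pM' npp' /=.
by rewrite !(inj_eq finj) !fe.
Qed.

Lemma match_preimage (SU : {set U}) (ST : {set T}) (M : {set T * T}) :
  (forall x, (f x \in ST) = (x \in SU)) -> induced_matching eT ST M ->
  (forall q, q \in M -> exists p, q = fpair p) ->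
  exists M', induced_matching eU SU M' /\ #|M'| = #|M|.
Proof.
move=> HS /andP [/forallP H1 /forallP H2] Hc.
exists (fpair @^-1: M); split.
  apply/andP; split.
    apply/forallP => p; apply/implyP; rewrite inE => pM.
    by move: (H1 (fpair p)); rewrite pM /= !HS fe.
  apply/forallP => p; apply/implyP; rewrite inE => pM.
  apply/forallP => p'; apply/implyP; rewrite inE => pM'.
  apply/implyP => npp.
  have npp' : fpair p != fpair p' by rewrite (inj_eq fpair_inj).
  move: (H2 (fpair p)); rewrite pM /= => /forallP /(_ (fpair p')); rewrite pM' npp' /=.
  by rewrite !(inj_eq finj) !fe.
rewrite -(card_imset _ fpair_inj); apply: eq_card => q.
apply/imsetP/idP => [[p] |qM].
  by rewrite inE => ? ->.
case: (Hc q qM) => p Ep; exists p => //; by rewrite inE -Ep.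
Qed.

Lemma Q_imset m (X : {set U}) : Q eU m X -> Q eT m (f @: X).
Proof.
move=> HQ s sinj.
have sfinj : injective (s \o f) by move=> x y /sinj /finj.
case: (HQ _ sfinj) => t [M [HM cM HX]].
case: (@match_image [set x | s (f x) < t] [set y | s y < t] M) => // [x|Hi Hc].
  by rewrite !inE.
exists t, (fpair @: M); split=> //; first by rewrite Hc.
move=> q /imsetP [p pM ->] /=.
by case/andP: (HX p pM) => h1 h2; rewrite !imset_f.
Qed.

Lemma mim_restr (SU : {set U}) (ST : {set T}) :
  (forall x, (f x \in ST) = (x \in SU)) -> mim_cut eU SU <= mim_cut eT ST.
Proof.
move=> HS; apply: mim_le => M HM.
case: (match_image HS HM) => H1 <-. exact: mim_ge.
Qed.

End Transfer.

Lemma Q_mono (T : finType) (e : rel T) m (X Y : {set T}) :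
  X \subset Y -> Q e m X -> Q e m Y.
Proof.
move=> sXY HQ s si; case: (HQ s si) => t Ht; exists t; exact: crit_mono Ht.
Qed.

Lemma bigmin_ge (I : finType) (P : pred I) (F : I -> nat) x0 m :
  m <= x0 -> (forall i, P i -> m <= F i) -> m <= \big[minn/x0]_(i | P i) F i.
Proof.
move=> h0 H. apply: (big_ind (fun x => m <= x)) => // x y hx hy.
by rewrite leq_min hx hy.
Qed.

Lemma bigmin_le (I : finType) (P : pred I) (F : I -> nat) x0 i0 :
  P i0 -> \big[minn/x0]_(i | P i) F i <= F i0.
Proof.
move=> Pi. rewrite -big_filter.
have : i0 \in [seq i <- index_enum I | P i] by rewrite mem_filter Pi mem_index_enum.
elim: [seq _ <- _ | _] => //= a s IH. rewrite in_cons big_cons.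
case/orP => [/eqP <-|/IH h]; [exact: geq_minl | exact: leq_trans (geq_minr _ _) h].
Qed.

Section LB.
Variables (T : finType) (e : rel T).

Lemma card_match_le S M : induced_matching e S M -> #|M| <= #|T|.
Proof.
move=> /andP [_ /forallP H].
rewrite -(@card_in_imset _ _ (fun p : T * T => p.1)); first exact: max_card.
move=> p q pM qM /= E; apply/eqP; apply/negPn/negP => npq.
move: (H p); rewrite pM /= => /forallP /(_ q); rewrite qM npq /= E eqxx.
done.
Qed.

Lemma mw_ge (s : {ffun T -> 'I_#|T|}) t M :
  induced_matching e [set x | s x < t] M -> 0 < #|M| -> #|M| <= mim_width e s.
Proof.
move=> HM.
case/card_gt0P=> p pM.
case: (induced_edge HM pM); rewrite !inE -leqNgt => h1 h2 _.
have tn : t < #|T| by apply: leq_ltn_trans h2 _.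
have t0 : 0 < t by apply: leq_ltn_trans h1.
apply: (leq_trans (mim_ge HM)).
rewrite /mim_width.
have -> : [set x | s x < t] = prefix_set s (Ordinal tn) by [].
by apply: (leq_bigmax_cond (F := fun i : 'I_#|T| => mim_cut e (prefix_set s i))).
Qed.

End LB.

Section LB2.
Variables (T : finType) (e : rel T).

Lemma lmw_ge m (X : {set T}) : 0 < m -> Q e m X -> m <= lmw e.
Proof.
move=> m0 HQ. rewrite /lmw.
case: (boolP [exists s : {ffun T -> 'I_#|T|}, layout s]) => [/existsP [s0 Hs0]|Hn].
  apply: bigmin_ge.
    have si : injective (fun x => nat_of_ord (s0 x)).
      by move=> x y /val_inj; apply/injectiveP.
    case: (HQ _ si) => t [M [HM cM _]].
    rewrite -cM; exact: card_match_le HM.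
  move=> s Hs.
  have si : injective (fun x => nat_of_ord (s x)).
    by move=> x y /val_inj; apply/injectiveP.
  case: (HQ _ si) => t [M [HM cM _]].
  rewrite -cM; apply: (mw_ge HM); by rewrite cM.
(* no layout: impossible since enum_rank-based one exists *)
exfalso; move: Hn; rewrite negb_exists => /forallP /(_ [ffun x => enum_rank x]).
rewrite /layout; move/negP; apply; apply/injectiveP => x y.
rewrite !ffunE. exact: enum_rank_inj.
Qed.

Lemma lmw_ge_del (r : T) m (X : {set T}) : 0 < m -> Q e m X ->
  (forall x, x \in X -> x != r) -> m <= lmw (del_vertex e r).
Proof.
move=> m0 HQ HX. rewrite /lmw.
have key (s : {ffun {x : T | x != r} -> 'I_#|{: {x : T | x != r}}|}) : layout s ->
   exists t M, induced_matching (del_vertex e r) [set y | s y < t] M /\ #|M| = m.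
  move=> Hs.
  pose s' (x : T) := if @insub _ (fun x => x != r) {x : T | x != r} x is Some y
                     then (nat_of_ord (s y)).+1 else 0.
  have si : injective s'.
    move=> x y; rewrite /s'.
    case: insubP => [x' _ Ex|nx]; case: insubP => [y' _ Ey|ny] //.
    - by case=> /val_inj /(injectiveP _ Hs) E; rewrite -Ex -Ey E.
    - move=> _. by move: nx ny; rewrite !negbK => /eqP -> /eqP ->.
  case: (HQ _ si) => t [M [HM cM HXM]].
  exists t.-1.
  have Hs' : forall y : {x : T | x != r},
      (val y \in [set x | s' x < t]) = (y \in [set y | s y < t.-1]).
    move=> y; rewrite !inE /s' valK. by case: t {HM cM} => //.
  have := (@match_preimage _ T (del_vertex e r) e val val_inj (fun _ _ => erefl) _ _ M Hs' HM).
  case.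
    move=> q qM; case/andP: (HXM q qM) => /HX q1 /HX q2.
    by move: q1 q2; case: q {qM} => a b /= q1 q2; exists (Sub a q1, Sub b q2).
  move=> M' [HM' cM']; exists M'; split=> //; by rewrite cM'.
case: (boolP [exists s : {ffun {x : T | x != r} -> 'I_#|{: {x : T | x != r}}|}, layout s]) => [/existsP [s0 Hs0]|Hn].
  apply: bigmin_ge.
    case: (key s0 Hs0) => [t [M [HM cM]]].
    rewrite -cM; exact: card_match_le HM.
  move=> s Hs.
  case: (key s Hs) => [t [M [HM cM]]].
  rewrite -cM; apply: (mw_ge HM); by rewrite cM.
exfalso; move: Hn; rewrite negb_exists => /forallP /(_ [ffun x => enum_rank x]).
rewrite /layout; move/negP; apply; apply/injectiveP => x y.
rewrite !ffunE. exact: enum_rank_inj.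
Qed.

Lemma lmw_le (r : T -> nat) K : injective r ->
  (forall t, mim_cut e [set x | r x < t] <= K) -> lmw e <= K.
Proof.
move=> rinj H.
pose rank x := #|[set y | r y < r x]|.
have rank_lt x : rank x < #|T|.
  rewrite /rank; apply: proper_card; apply/properP; split; first by apply/subsetP.
  by exists x; rewrite ?inE ?ltnn.
have rank_mono x y : r x < r y -> rank x < rank y.
  move=> lxy; apply: proper_card; apply/properP; split.
    apply/subsetP => z; rewrite !inE => h; exact: ltn_trans h lxy.
  by exists x; rewrite !inE ?ltnn.
have rank_inj : injective rank.
  move=> x y E; apply: rinj; case: (ltngtP (r x) (r y)) => // /rank_mono; by rewrite E ltnn.
pose s := [ffun x => Ordinal (rank_lt x)].
have Hs : layout s.
  apply/injectiveP => x y; rewrite !ffunE; case=> /rank_inj //.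
apply: (leq_trans (bigmin_le _ _ Hs)).
apply/bigmax_leqP => i _.
set D := prefix_set s i.
set t := \max_(x in D) (r x).+1.
have -> : D = [set x | r x < t].
  apply/setP => x; rewrite inE; apply/idP/idP => [xD|].
    by apply: (leq_bigmax_cond (F := fun x => (r x).+1)).
  move=> xt; apply/negPn/negP => nxD.
  have [y yD ry] : exists2 y, y \in D & r x < (r y).+1.
    case: (boolP [exists y in D, r x < (r y).+1]) => [/exists_inP //|].
    rewrite negb_exists_in => /forall_inP Hn. exfalso.
    move: xt; rewrite /t ltnNge => /negP; apply.
    apply/bigmax_leqP => y yD; move: (Hn y yD); by rewrite -leqNgt.
  move: ry; rewrite ltnS leq_eqVlt; case/orP => [/eqP /rinj E|lt].
    by move: nxD; rewrite E yD.
  move: yD nxD; rewrite /D !inE !ffunE /= => yi; case/negP.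
  exact: ltn_trans (rank_mono _ _ lt) yi.
exact: H.
Qed.

End LB2.

Definition uu k : Hv k.+1 := None.
Definition vv k (i : 'I_3) : Hv k.+1 := Some (i, None).
Definition cp k (i j : 'I_3) (z : Hv k) : Hv k.+1 := Some (i, Some (j, z)).
Arguments uu {k}.
Arguments vv {k}.

Lemma Hadj_sym k : symmetric (@Hadj k).
Proof.
elim: k => [//|k IH] [[i [[j z]|]]|] [[i' [[j' z']|]]|] //=.
by rewrite (eq_sym i) (eq_sym j) IH.
Qed.

Lemma Hadj_irr k (x : Hv k) : Hadj x x = false.
Proof. elim: k x => [//|k IH] [[i [[j z]|]]|] //=; by rewrite IH !andbF. Qed.

Lemma cp_inj k i j : injective (@cp k i j).
Proof. by move=> x y [->]. Qed.

Lemma Hadj_cp k i j (x y : Hv k) : Hadj (cp i j x) (cp i j y) = Hadj x y.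
Proof. by rewrite /= !eqxx. Qed.

Definition sq k := sq_graph (@Hadj k).

Section Neq.
Variable k : nat.
Lemma neq_vc i i' j (z : Hv k) : (vv i != cp i' j z). Proof. by apply/eqP. Qed.
Lemma neq_cv i i' j (z : Hv k) : (cp i' j z != vv i). Proof. by apply/eqP. Qed.
Lemma neq_uv i : (@uu k != vv i). Proof. by apply/eqP. Qed.
Lemma neq_vu i : (@vv k i != uu). Proof. by apply/eqP. Qed.
Lemma neq_uc i j (z : Hv k) : (uu != cp i j z). Proof. by apply/eqP. Qed.
Lemma neq_cu i j (z : Hv k) : (cp i j z != uu). Proof. by apply/eqP. Qed.
End Neq.

Lemma sq_sym k : symmetric (@sq k).
Proof.
move=> x y; rewrite /sq /sq_graph eq_sym Hadj_sym; congr (_ && (_ || _)).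
apply/existsP/existsP => [[z /andP [h1 h2]]|[z /andP [h1 h2]]]; exists z;
  by rewrite Hadj_sym h2 Hadj_sym h1.
Qed.

Lemma sq_irr k (x : Hv k) : sq x x = false.
Proof. by rewrite /sq /sq_graph eqxx. Qed.

Lemma Hadj_sq k (x y : Hv k) : Hadj x y -> sq x y.
Proof.
move=> h; rewrite /sq /sq_graph h orTb andbT; apply: contraTneq h => ->.
by rewrite Hadj_irr.
Qed.

Section SqChar.
Variable k : nat.
Local Notation r0 := (Hroot k).

Lemma exE_cc i j z i' j' z' :
  [exists w : Hv k.+1, Hadj (cp i j z) w && Hadj w (cp i' j' z')] =
  (i == i') && ((z == r0) && (z' == r0) || (j == j') && [exists w, Hadj z w && Hadj w z']).
Proof.
apply/existsP/idP.
  case=> [[[i1 [[j1 w]|]]|]] //=.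
    case/andP=> /and3P [/eqP <- /eqP <- h1] /and3P [/eqP -> /eqP -> h2].
    rewrite !eqxx /=. apply/orP; right; apply/existsP; exists w; by rewrite h1 h2.
  by case/andP=> /andP [/eqP -> /eqP ->] /andP [/eqP -> /eqP ->]; rewrite !eqxx.
case/andP=> /eqP <- /orP [/andP [/eqP -> /eqP ->]|/andP [/eqP <- /existsP [w /andP [h1 h2]]]].
  by exists (vv i); rewrite /= !eqxx.
by exists (cp i j w); rewrite /= !eqxx h1 h2.
Qed.

Lemma sq_cc i j z i' j' z' :
  sq (cp i j z) (cp i' j' z') =
  (i == i') && (if j == j' then sq z z' else (z == r0) && (z' == r0)).
Proof.
rewrite /sq /sq_graph exE_cc /=.
case: (eqVneq i i') => [<-|ni] /=; last by rewrite andbF.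
case: (eqVneq j j') => [<-|nj] /=.
  rewrite (inj_eq (@cp_inj k i j)).
  case: (eqVneq z z') => [<-|nz] //=.
  case: (eqVneq z r0) => [ez|] //=.
  case: (eqVneq z' r0) => [ez'|] //=. by rewrite ez ez' eqxx in nz.
have -> : (cp i j z != cp i j' z').
  by apply/eqP; case=> /eqP; rewrite (negbTE nj).
by rewrite /= orbF.
Qed.

Lemma sq_uc i j z : sq uu (cp i j z) = (z == r0).
Proof.
rewrite /sq /sq_graph /=.
apply/existsP/idP => [[w]|/eqP ->].
  case: w => [[i1 [[j1 w]|]]|] //=. by case/andP=> _ /eqP ->.
by exists (vv i); rewrite /= !eqxx.
Qed.

Lemma sq_cu i j z : sq (cp i j z) uu = (z == r0).
Proof. by rewrite sq_sym sq_uc. Qed.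

Lemma sq_uv i : sq (@uu k) (vv i) = true.
Proof. by rewrite /sq /sq_graph. Qed.

Lemma sq_vu i : sq (@vv k i) uu = true.
Proof. by rewrite /sq /sq_graph. Qed.

Lemma sq_uu : sq (@uu k) uu = false.
Proof. exact: sq_irr. Qed.

Lemma sq_vv i i' : sq (vv i) (@vv k i') = (i != i').
Proof.
rewrite /sq /sq_graph /=.
case: (eqVneq i i') => [<-|ni] /=; first by rewrite eqxx.
rewrite (_ : vv i != vv i') //; last by apply/eqP; case=> /eqP; rewrite (negbTE ni).
apply/existsP; by exists uu.
Qed.

Lemma sq_vc i i' j z : sq (vv i) (cp i' j z) = (i == i') && ((z == r0) || Hadj r0 z).
Proof.
rewrite /sq /sq_graph /=.
rewrite neq_vc /=.
case: (eqVneq i i') => [<-|ni] /=.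
  case: (eqVneq z r0) => [->|nz] /=; first by [].
  apply/existsP/idP => [[w]|h].
    case: w => [[i1 [[j1 w]|]]|] //=.
    by case/andP=> /andP [_ /eqP ->] /and3P [_ _ ->].
  by exists (cp i j r0); rewrite /= !eqxx.
apply/negbTE; rewrite negb_exists; apply/forallP => w.
case: w => [[i1 [[j1 w]|]]|] //=.
apply/negP => /andP [/andP [/eqP <- _] /and3P [/eqP E _ _]].
by rewrite E eqxx in ni.
Qed.

Lemma sq_cv i i' j z : sq (cp i' j z) (vv i) = (i == i') && ((z == r0) || Hadj r0 z).
Proof. by rewrite sq_sym sq_vc. Qed.

Lemma sq_cp i j (x y : Hv k) : sq (cp i j x) (cp i j y) = sq x y.
Proof. by rewrite sq_cc !eqxx. Qed.

End SqChar.

Fixpoint Nb k := match k with 0 => 1 | k'.+1 => 3 * (3 * Nb k' + 2) end.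

Fixpoint rk k : Hv k -> nat :=
  match k return Hv k -> nat with
  | 0 => fun _ => 0
  | k'.+1 => fun x =>
    match x with
    | None => 3 * Nb k' + 1
    | Some (i, None) => i * (3 * Nb k' + 2) + 3 * Nb k'
    | Some (i, Some (j, z)) => i * (3 * Nb k' + 2) + j * Nb k' + rk z
    end
  end.

Lemma rk_lt k (x : Hv k) : rk x < Nb k.
Proof.
elim: k x => [//|k IH] [[[[|[|[|i]]] Hi] [[[[|[|[|j]]] Hj] z]|]]|] //=;
  try (have := IH z); lia.
Qed.

Lemma rk_u k : rk (@uu k) = 3 * Nb k + 1. Proof. by []. Qed.
Lemma rk_v k i : rk (@vv k i) = i * (3 * Nb k + 2) + 3 * Nb k. Proof. by []. Qed.
Lemma rk_c k i j z : rk (@cp k i j z) = i * (3 * Nb k + 2) + j * Nb k + rk z. Proof. by []. Qed.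

Lemma rk_inj k : injective (@rk k).
Proof.
elim: k => [[] [] //|k IH] x y.
have hz := @rk_lt k.
case: x => [[[[|[|[|i]]] Hi] [[[[|[|[|j]]] Hj] z]|]]|] //;
case: y => [[[[|[|[|i']]] Hi'] [[[[|[|[|j']]] Hj'] z']|]]|] //= E;
  try (have h1 := hz z); try (have h2 := hz z'); try lia.
all: try (have Ez : z = z' by apply: IH; lia); try subst.
all: by rewrite ?(bool_irrelevance Hi Hi') ?(bool_irrelevance Hj Hj').
Qed.

Section Pos.
Variable k : nat.
Local Notation N := (Nb k).

Lemma P_cv i j (z : Hv k) : rk (cp i j z) < rk (@vv k i).
Proof. rewrite rk_c rk_v; have := rk_lt z; case: i j => [[|[|[|i]]] Hi] [[|[|[|j]]] Hj] //=; lia. Qed.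

Lemma P_vv (i i' : 'I_3) : i < i' -> rk (@vv k i) < rk (@vv k i').
Proof. rewrite !rk_v; case: i i' => [[|[|[|i]]] Hi] [[|[|[|i']]] Hi'] //=; lia. Qed.

Lemma P_vc (i i' : 'I_3) j (z : Hv k) : i < i' -> rk (@vv k i) < rk (cp i' j z).
Proof. rewrite rk_c rk_v; case: i i' j => [[|[|[|i]]] Hi] [[|[|[|i']]] Hi'] [[|[|[|j]]] Hj] //=; lia. Qed.

Lemma P_cc (i i' : 'I_3) j j' (z z' : Hv k) : i < i' -> rk (cp i j z) < rk (cp i' j' z').
Proof. move=> h; exact: ltn_trans (P_cv _ _ _) (P_vc _ _ h). Qed.

Lemma P_v0u (i : 'I_3) : val i = 0 -> rk (@vv k i) < rk (@uu k).
Proof. rewrite rk_v rk_u => ->; lia. Qed.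

Lemma P_uv (i : 'I_3) : 0 < i -> rk (@uu k) < rk (@vv k i).
Proof. rewrite rk_v rk_u; case: i => [[|[|[|i]]] Hi] //=; lia. Qed.

Lemma P_uc (i : 'I_3) j (z : Hv k) : 0 < i -> rk (@uu k) < rk (cp i j z).
Proof. rewrite rk_c rk_u; case: i j => [[|[|[|i]]] Hi] [[|[|[|j]]] Hj] //=; lia. Qed.

Lemma P_c0u (i : 'I_3) j (z : Hv k) : val i = 0 -> rk (cp i j z) < rk (@uu k).
Proof. rewrite rk_c rk_u => ->; have := rk_lt z; case: j => [[|[|[|j]]] Hj] //=; lia. Qed.

Lemma cp_uniq (i j i' j' : 'I_3) (z1 z2 w1 w2 : Hv k) t :
  rk (cp i j z1) < t -> t <= rk (cp i j z2) ->
  rk (cp i' j' w1) < t -> t <= rk (cp i' j' w2) -> (i == i') && (j == j').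
Proof.
rewrite !rk_c; have := rk_lt z1; have := rk_lt z2; have := rk_lt w1; have := rk_lt w2.
case: i j i' j' => [[|[|[|i]]] Hi] [[|[|[|j]]] Hj] [[|[|[|i']]] Hi'] [[|[|[|j']]] Hj'] //=; lia.
Qed.

End Pos.

Definition inside k (p : Hv k.+1 * Hv k.+1) : bool :=
  match p with
  | (Some (i, Some (j, _)), Some (i', Some (j', _))) => (i == i') && (j == j')
  | _ => false
  end.

Definition crossing (T : finType) (r : T -> nat) (e : rel T) t (p : T * T) :=
  [&& r p.1 < t, t <= r p.2 & e p.1 p.2].

Lemma induced_sub (T : finType) (e : rel T) S (A M : {set T * T}) :
  A \subset M -> induced_matching e S M -> induced_matching e S A.
Proof.
move=> /subsetP sAM /andP [/forallP H1 /forallP H2]; apply/andP; split.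
  apply/forallP => p; apply/implyP => /sAM pM; by move: (H1 p); rewrite pM.
apply/forallP => p; apply/implyP => pA; apply/forallP => q; apply/implyP => qA.
by move: (H2 p); rewrite (sAM _ pA) /= => /forallP /(_ q); rewrite (sAM _ qA).
Qed.

Lemma ub_step k (e1 : rel (Hv k.+1)) (e0 : rel (Hv k)) K c
  (cls : Hv k.+1 * Hv k.+1 -> 'I_c) :
  (forall i j z z', e1 (cp i j z) (cp i j z') = e0 z z') ->
  (forall t, mim_cut e0 [set x | rk x < t] <= K) ->
  (forall t p q, crossing (@rk _) e1 t p -> crossing (@rk _) e1 t q ->
     ~~ inside p -> ~~ inside q -> cls p = cls q -> p != q -> conflict e1 p q) ->
  forall t, mim_cut e1 [set x | rk x < t] <= K + c.
Proof.
move=> He Hih Htop t; apply: mim_le => M HM.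
have cross p : p \in M -> crossing (@rk _) e1 t p.
  move=> pM; case: (induced_edge HM pM); rewrite !inE -leqNgt => h1 h2 h3.
  by rewrite /crossing h1 h2 h3.
rewrite -(cardsID [set p | inside p] M); apply: leq_add.
- case: (set_0Vmem (M :&: [set p | inside p])) => [->|[p0]]; first by rewrite cards0.
  rewrite !inE => /andP [p0M].
  move: p0M; case: p0 => [[[i [[j z0]|]]|] [[i' [[j' w0]|]]|]] //= p0M /andP [/eqP ei /eqP ej].
  subst i' j'.
  have Hin q : q \in M :&: [set p | inside p] -> exists p, q = (cp i j p.1, cp i j p.2).
    rewrite !inE => /andP [qM].
    move: qM; case: q => [[[a [[b z]|]]|] [[a' [[b' w]|]]|]] //= qM /andP [/eqP ea /eqP eb].
    subst a' b'.
    case/and3P: (cross _ qM) => /= q1 q2 _.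
    case/and3P: (cross _ p0M) => /= q3 q4 _.
    case/andP: (cp_uniq q1 q2 q3 q4) => /eqP -> /eqP ->.
    by exists (z, w).
  set lo := i * (3 * Nb k + 2) + j * Nb k.
  have HS : forall z : Hv k, (cp i j z \in [set x | rk x < t]) = (z \in [set z | rk z < t - lo]).
    move=> z; rewrite /lo !inE rk_c. lia.
  case: (@match_preimage _ _ e0 e1 (cp i j) (@cp_inj k i j) (fun x y => He i j x y)
             _ _ _ HS (induced_sub (subsetIl _ _) HM) Hin) => M' [HM' <-].
  apply: leq_trans (Hih (t - lo)). exact: mim_ge HM'.
- rewrite -(card_ord c).
  rewrite -(@card_in_imset _ _ cls); first exact: max_card.
  move=> p q; rewrite !inE => /andP [np pM] /andP [nq qM] E.
  apply/eqP; apply/negPn/negP => npq.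
  have := Htop t p q (cross _ pM) (cross _ qM) np nq E npq.
  by apply/negP; apply: induced_noconf HM pM qM npq.
Qed.

Lemma ord_cmp (n : nat) (i i' : 'I_n) : [\/ i < i', i = i' | i' < i].
Proof.
case: (ltngtP i i') => h; [exact: Or31|exact: Or33|apply: Or32; exact: val_inj].
Qed.

Section Tree.
Variable k : nat.
Local Notation r0 := (Hroot k).

Lemma tree_shape t (p : Hv k.+1 * Hv k.+1) : crossing (@rk _) (@Hadj _) t p -> ~~ inside p ->
  [\/ exists i : 'I_3, p = (uu, vv i) /\ 0 < i,
      exists i : 'I_3, p = (vv i, uu) /\ val i = 0
    | exists i j, p = (cp i j r0, vv i)].
Proof.
case: p => [[[i [[j z]|]]|] [[i' [[j' z']|]]|]] /and3P [/= h1 h2 h3] //= hin.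
- by case/and3P: h3 => /eqP E1 /eqP E2 _; rewrite E1 E2 !eqxx in hin.
- case/andP: h3 => /eqP E /eqP ->; subst. apply: Or33; by exists i, j.
- case/andP: h3 => /eqP E /eqP Ez; subst.
  have /= := P_cv i' j' r0; rewrite /cp /vv /=. lia.
- apply: Or32; exists i; split=> //.
  case: (posnP i) => // ip; have /= := P_uv k ip; rewrite /uu /vv /=; lia.
- apply: Or31; exists i'; split=> //.
  case: (posnP i') => // ip. have /= := P_v0u k ip; rewrite /uu /vv /=; lia.
Qed.

Lemma tree_top t p q : crossing (@rk _) (@Hadj _) t p -> crossing (@rk _) (@Hadj _) t q ->
  ~~ inside p -> ~~ inside q -> p != q -> conflict (@Hadj k.+1) p q.
Proof.
move=> hp hq np nq.
case: (tree_shape hp np) => [[i [Ep i0]]|[i [Ep i0]]|[i [j Ep]]];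
case: (tree_shape hq nq) => [[i' [Eq i0']]|[i' [Eq i0']]|[i' [j' Eq]]];
move: hp hq; rewrite Ep Eq => /and3P [/= p1 p2 _] /and3P [/= q1 q2 _] npq;
rewrite /conflict /=; try by rewrite ?eqxx ?orbT.
all: try lia.
- case: (posnP i') => ip.
    have E : i = i' by apply: val_inj; move: i0 ip => /= -> ->.
    subst i'. lia.
  have /= := P_uc j' r0 ip. lia.
- case: (posnP i) => ip.
    have E : i = i' by apply: val_inj; move: i0' ip => /= -> ->.
    subst i'. lia.
  have /= := P_uc j r0 ip. lia.
- case: (ord_cmp i i') => [lt|E|lt].
  + have /= := P_vc j' r0 lt. lia.
  + by subst i'; rewrite !eqxx orbT.
  + have /= := P_vc j r0 lt. lia.
Qed.

End Tree.

Arguments rk : simpl never.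

Lemma nf1 a t : a < t -> t <= a -> False.
Proof. lia. Qed.
Lemma nf2 a b t : a < b -> b < t -> t <= a -> False.
Proof. lia. Qed.
Lemma nf3 a b c t : a < b -> b < c -> c < t -> t <= a -> False.
Proof. lia. Qed.

Definition o0 : 'I_3 := @Ordinal 3 0 isT.
Definition o1 : 'I_3 := @Ordinal 3 1 isT.
Definition o2 : 'I_3 := @Ordinal 3 2 isT.

Lemma ord3_cases (i : 'I_3) : [\/ i = o0, i = o1 | i = o2].
Proof.
case: i => [[|[|[|i]]] Hi] //; [apply: Or31|apply: Or32|apply: Or33]; exact: val_inj.
Qed.

Section Sq.
Variable k : nat.
Local Notation r0 := (Hroot k).
Local Notation V := (Hv k.+1).

Inductive sqsh (p : V * V) : Prop :=
| Sh1 i of p = (uu, vv i) & 0 < i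
| Sh3 of p = (vv o1, vv o2)
| Sh4 i j of p = (uu, cp i j r0) & 0 < i
| Sh5 j of p = (cp o0 j r0, uu)
| Sh6 i j z of p = (cp i j z, vv i) & (z == r0) || Hadj r0 z
| Sh7 i j j' of p = (cp i j r0, cp i j' r0) & j != j'.

Lemma sq_shape t (p : V * V) : crossing (@rk _) (@sq _) t p -> ~~ inside p ->
  p.1 != vv o0 -> sqsh p.
Proof.
case: p => [[[i [[j z]|]]|] [[i' [[j' z']|]]|]] /and3P [/= h1 h2 h3] //= hin hv.
- move: h3; rewrite -/(cp _ _ _) -/(cp _ _ _) sq_cc.
  case/andP=> /eqP E; subst i'.
  case: (eqVneq j j') => [E|nj]; first by subst; rewrite !eqxx in hin.
  case/andP=> /eqP -> /eqP ->. exact: Sh7 nj.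
- move: h3; rewrite -/(cp _ _ _) -/(vv _) sq_cv => /andP [/eqP E hz]; subst i'.
  exact: Sh6 hz.
- move: h3; rewrite -/(cp _ _ _) -/(uu) sq_cu => /eqP E; subst z.
  case: (posnP i) => ip.
    have -> : i = o0 by apply: val_inj.
    exact: Sh5.
  exfalso; exact: nf2 (P_uc j r0 ip) h1 h2.
- move: h3; rewrite -/(cp _ _ _) -/(vv _) sq_vc => /andP [/eqP E hz]; subst i'.
  exfalso; exact: nf2 (P_cv i j' z') h1 h2.
- move: h3; rewrite -/(vv _) -/(vv _) sq_vv => ni.
  case: (ord_cmp i i') => [lt|E|lt]; last first.
  + exfalso; exact: nf2 (P_vv k lt) h1 h2.
  + by subst; rewrite eqxx in ni.
  + case: (ord3_cases i) hv lt => -> // _; case: (ord3_cases i') => -> // _.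
    exact: Sh3.
- case: (posnP i) => ip.
    have E : i = o0 by apply: val_inj.
    by move: hv; rewrite E eqxx.
  exfalso; exact: nf2 (P_uv k ip) h1 h2.
- move: h3; rewrite -/(uu) -/(cp _ _ _) sq_uc => /eqP E; subst z'.
  case: (posnP i') => ip; last exact: Sh4 ip.
  exfalso; exact: nf2 (P_c0u j' r0 ip) h1 h2.
- case: (posnP i') => ip; last exact: Sh1 ip.
  exfalso; exact: nf2 (P_v0u k ip) h1 h2.
Qed.

Definition scls (p : V * V) : 'I_2 := if p.1 == vv o0 then ord_max else ord0.

Lemma sq_top t p q : crossing (@rk _) (@sq _) t p -> crossing (@rk _) (@sq _) t q ->
  ~~ inside p -> ~~ inside q -> scls p = scls q -> p != q -> conflict (@sq k.+1) p q.
Proof.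
move=> hp hq np nq; rewrite /scls.
case: (eqVneq p.1 (vv o0)) => hp1; case: (eqVneq q.1 (vv o0)) => hq1 // _ npq.
  by rewrite /conflict hp1 hq1 eqxx.
case: (sq_shape hp np hp1) => [i Ep i0|Ep|i j Ep i0|j Ep|i j z Ep hz|i j j' Ep nj];
case: (sq_shape hq nq hq1) => [i' Eq i0'|Eq|i' j2 Eq i0'|j2 Eq|i' j2 z2 Eq hz2|i' j2 j2' Eq nj2];
move: hp hq npq; rewrite Ep Eq => /and3P [/= p1 p2 _] /and3P [/= q1 q2 _] npq;
rewrite /conflict /= ?sq_uv ?sq_vu ?sq_uc ?sq_cu ?sq_vv ?sq_vc ?sq_cv ?sq_cc ?eqxx ?orbT ?orTb ?andbT ?sq_irr //.
all: idtac.
- exfalso; exact: nf1 p1 q2.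
- case: (eqVneq o1 i') => [E|ne]; last by apply/or4P; apply: Or43.
  subst i'; exfalso; exact: nf1 p1 q2.
- case: (ord3_cases i') => E; subst i'.
  + exfalso; exact: nf3 (P_cv o0 j2' r0) (P_vv k (isT : o0 < o1)) p1 q2.
  + exfalso; exact: nf2 (P_cv o1 j2' r0) p1 q2.
  + by rewrite eqxx orbT.
- exfalso; exact: nf1 p1 q2.
- exfalso; exact: nf1 q1 p2.
- exfalso; exact: nf1 q1 p2.
- case: (posnP i') => ip.
    have -> : i' = o0 by apply: val_inj.
    by rewrite eqxx orbT.
  exfalso; exact: nf2 (P_uc j2 z2 ip) q1 p2.
- case: (eqVneq o1 i) => [E|ne]; last by apply/or4P; apply: Or44.
  subst i; exfalso; exact: nf1 q1 p2.
- case: (posnP i) => ip.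
    have -> : i = o0 by apply: val_inj.
    by rewrite eqxx !orbT.
  exfalso; exact: nf2 (P_uc j z ip) p1 q2.
- case: (ord_cmp i i') => [lt|E|lt].
  + exfalso; exact: nf2 (P_vc j2 z2 lt) q1 p2.
  + by subst; rewrite eqxx !orbT.
  + exfalso; exact: nf2 (P_vc j z lt) p1 q2.
- case: (ord_cmp i i') => [lt|E|lt].
  + exfalso; exact: nf2 (P_vc j2 r0 lt) q1 p2.
  + by subst; rewrite eqxx !orbT.
  + exfalso; exact: nf2 (P_cc j2' j r0 z lt) p1 q2.
- case: (ord3_cases i) => E; subst i.
  + exfalso; exact: nf3 (P_cv o0 j' r0) (P_vv k (isT : o0 < o1)) q1 p2.
  + exfalso; exact: nf2 (P_cv o1 j' r0) q1 p2.
  + by rewrite eqxx !orbT.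
- case: (ord_cmp i i') => [lt|E|lt].
  + exfalso; exact: nf2 (P_cc j' j2 r0 z2 lt) q1 p2.
  + by subst; rewrite eqxx !orbT.
  + exfalso; exact: nf2 (P_vc j r0 lt) p1 q2.
- case: (ord_cmp i i') => [lt|E|lt].
  + exfalso; exact: nf2 (P_cc j' j2 r0 r0 lt) q1 p2.
  + subst i'; rewrite eqxx /=.
    case: ifP => [/eqP E|_]; last by rewrite !orbT.
    subst j2'. exfalso; exact: nf1 p1 q2.
  + exfalso; exact: nf2 (P_cc j2' j r0 r0 lt) p1 q2.
Qed.

End Sq.

Lemma mim0 (T : finType) (e : rel T) S : (forall x y, e x y = false) -> mim_cut e S <= 0.
Proof.
move=> H; apply: mim_le => M HM; rewrite leqn0 cards_eq0; apply/eqP/setP => p.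
rewrite inE; apply/negP => pM; case: (induced_edge HM pM) => _ _; by rewrite H.
Qed.

Theorem ub_tree k t : mim_cut (@Hadj k) [set x | rk x < t] <= k.
Proof.
elim: k t => [|k IH] t; first exact: mim0.
have H := (@ub_step k (@Hadj k.+1) (@Hadj k) k 1 (fun _ => @ord0 0) (@Hadj_cp k) IH).
rewrite addn1 in H; apply: H => t' p q hp hq np nq _ npq.
exact: tree_top hp hq np nq npq.
Qed.

Theorem ub_sq k t : mim_cut (@sq k) [set x | rk x < t] <= 2 * k.
Proof.
elim: k t => [|k IH] t.
  apply: mim0 => x y; by case: x; case: y; rewrite /sq /sq_graph eqxx.
rewrite (_ : 2 * k.+1 = 2 * k + 2); last lia.
apply: (@ub_step k (@sq k.+1) (@sq k) (2 * k) 2 (@scls k) (@sq_cp k) IH) => t' p q hp hq np nq E npq.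
exact: sq_top hp hq np nq E npq.
Qed.

Theorem ub_lmw_tree k : lmw (@Hadj k) <= k.
Proof. apply: (lmw_le (@rk_inj k)); exact: ub_tree. Qed.

Theorem ub_lmw_sq k : lmw (sq_graph (@Hadj k)) <= 2 * k.
Proof. apply: (lmw_le (@rk_inj k)); exact: ub_sq. Qed.

Theorem ub_lmw_del k : lmw (del_vertex (sq_graph (@Hadj k)) (Hroot k)) <= 2 * k.
Proof.
have rinj : injective (fun y : {x : Hv k | x != Hroot k} => rk (val y)).
  by move=> x y /rk_inj /val_inj.
apply: (lmw_le rinj) => t.
apply: leq_trans (ub_sq k t).
apply: (@mim_restr _ _ _ (@sq k) val val_inj) => // x.
by rewrite !inE.
Qed.

Definition copyset k (i j : 'I_3) : {set Hv k.+1} := cp i j @: [set: Hv k].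
Definition groupset k (i : 'I_3) : {set Hv k.+1} :=
  [set vv i] :|: copyset k i o0 :|: copyset k i o1 :|: copyset k i o2.

Lemma in_copyset k i j (y : Hv k.+1) : y \in copyset k i j -> exists z, y = cp i j z.
Proof. by case/imsetP => z _ ->; exists z. Qed.

Lemma cp_in k i j (z : Hv k) : cp i j z \in copyset k i j.
Proof. exact: imset_f. Qed.

Lemma in_groupset k i (y : Hv k.+1) : y \in groupset k i -> y = vv i \/ exists j z, y = cp i j z.
Proof.
rewrite !inE -!orbA; case/or4P => [/eqP ->|h|h|h]; [by left| | |];
  right; case: (in_copyset h) => z ->; by eexists _, z.
Qed.

Lemma copy_groupset k i j (z : Hv k) : cp i j z \in groupset k i.
Proof.
rewrite /groupset !inE -!orbA.
case: (ord3_cases j) => ->; rewrite cp_in ?orbT //.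
Qed.

Lemma conn_H k : conn (@Hadj k) setT.
Proof.
elim: k => [|k IH].
  have -> : [set: Hv 0] = [set tt] by apply/setP => -[]; rewrite !inE.
  exact: conn1.
have cc i j : conn (@Hadj k.+1) (copyset k i j).
  apply: conn_imset IH => x y; by rewrite Hadj_cp.
have cg i : conn (@Hadj k.+1) (groupset k i).
  rewrite /groupset.
  have rt j : Hadj (vv i) (cp i j (Hroot k)) by rewrite /= !eqxx.
  apply: (connU (@Hadj_sym _) _ (cc i o2) _ (cp_in _ _ _) (rt o2)); last by rewrite !inE eqxx.
  apply: (connU (@Hadj_sym _) _ (cc i o1) _ (cp_in _ _ _) (rt o1)); last by rewrite !inE eqxx.
  apply: (connU (@Hadj_sym _) _ (cc i o0) _ (cp_in _ _ _) (rt o0)); last by rewrite !inE eqxx.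
  exact: conn1.
have ug i : Hadj (@uu k) (vv i) by [].
have vg i : vv i \in groupset k i by rewrite !inE eqxx.
have -> : [set: Hv k.+1] = [set uu] :|: groupset k o0 :|: groupset k o1 :|: groupset k o2.
  apply/setP => x; rewrite inE; symmetry.
  case: x => [[i [[j z]|]]|]; last by rewrite !inE eqxx.
    rewrite -/(cp i j z).
    by case: (ord3_cases i) => ->; case: (ord3_cases j) => ->; rewrite !in_setU cp_in ?orbT.
  by case: (ord3_cases i) => ->; rewrite !inE eqxx ?orbT.
apply: (connU (@Hadj_sym _) _ (cg o2) _ (vg o2) (ug o2)); last by rewrite !inE eqxx.
apply: (connU (@Hadj_sym _) _ (cg o1) _ (vg o1) (ug o1)); last by rewrite !inE eqxx.
apply: (connU (@Hadj_sym _) _ (cg o0) _ (vg o0) (ug o0)); last by rewrite !inE eqxx.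
exact: conn1.
Qed.

Lemma med3 (x : 'I_3 -> nat) : exists t : 'I_3 * 'I_3 * 'I_3,
  [/\ t.1.1 != t.1.2, t.2 != t.1.2, t.1.1 != t.2, x t.1.1 <= x t.1.2 & x t.1.2 <= x t.2].
Proof.
case: (leqP (x o0) (x o1)) => h01; case: (leqP (x o1) (x o2)) => h12;
case: (leqP (x o0) (x o2)) => h02.
- by exists (o0, o1, o2); split.
- by exists (o0, o1, o2); split.
- by exists (o0, o2, o1); split=> //; apply: ltnW.
- by exists (o2, o0, o1); split=> //; apply: ltnW.
- by exists (o1, o0, o2); split=> //; apply: ltnW.
- by exists (o1, o2, o0); split=> //; apply: ltnW.
- exfalso; lia.
- by exists (o2, o1, o0); split=> //; apply: ltnW.
Qed.

Lemma choose9 (p : 'I_3 -> 'I_3 -> nat) : exists a b j1 j2 c d jc jd : 'I_3,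
  [/\ [&& j1 != b, j2 != b, j1 != j2, c != a, d != a & c != d],
      p a j1 <= p a b, p a b <= p a j2, p c jc <= p a b & p a b <= p d jd].
Proof.
have [f Hf] := fin_all_exists (fun i => med3 (p i)).
pose M i := p i (f i).1.2.
have [[[c a] d] [ca da cd h1 h2]] := med3 M.
case: (Hf a) => [h3 h4 h5 h6 h7].
exists a, (f a).1.2, (f a).1.1, (f a).2, c, d, (f c).1.2, (f d).1.2.
by split=> //; rewrite h3 h4 h5 ca da cd.
Qed.

Lemma crit0 (T : finType) (e : rel T) (s : T -> nat) t : crit e s 0 set0 t.
Proof.
exists set0; split.
- by rewrite /induced_matching; apply/andP; split; apply/forallP => p; rewrite in_set0.
- by rewrite cards0.
- by move=> p; rewrite in_set0.
Qed.

Lemma lt_of_le_neq (T : finType) (s : T -> nat) (x y : T) : injective s -> s x <= s y -> x != y -> s x < s y.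
Proof.
move=> si h nxy; rewrite ltn_neqAle h andbT; apply: contra_neq nxy; exact: si.
Qed.

Section TreeLB.
Variable k : nat.
Local Notation r0 := (Hroot k).

Lemma tree_core s m t (j j1 j2 : 'I_3) (X : {set Hv k.+1}) :
  j1 != j -> j2 != j -> crit (@Hadj _) s m X t ->
  (forall x, x \in X -> exists w, x = cp j o0 w) ->
  (exists2 a, a \in copyset k j1 o0 & s a < t) ->
  (exists2 b, b \in copyset k j2 o0 & t <= s b) ->
  crit (@Hadj _) s m.+1 setT t.
Proof.
move=> nj1 nj2 cX HX [a aC ha] [b bC hb].
set C := copyset k j1 o0 :|: [set vv j1] :|: [set uu] :|: [set vv j2] :|: copyset k j2 o0.
apply: (@crit_mono _ _ _ _ (X :|: C)); first exact: subsetT.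
have cc i : conn (@Hadj k.+1) (copyset k i o0).
  have H : forall x y : Hv k, Hadj x y -> Hadj (cp i o0 x) (cp i o0 y).
    by move=> x y; rewrite Hadj_cp.
  exact: (conn_imset H (@conn_H k)).
apply: (step1 cX).
- apply: (connU (@Hadj_sym _) (x := vv j2) (y := cp j2 o0 r0) _ (cc j2));
    [| by rewrite !inE eqxx ?orbT | exact: cp_in | by rewrite /= !eqxx].
  apply: (connU (@Hadj_sym _) (x := uu) (y := vv j2) _ (@conn1 _ _ (vv j2)));
    [| by rewrite !inE eqxx ?orbT | by rewrite !inE eqxx | by []].
  apply: (connU (@Hadj_sym _) (x := vv j1) (y := uu) _ (@conn1 _ _ uu));
    [| by rewrite !inE eqxx ?orbT | by rewrite !inE eqxx | by []].
  apply: (connU (@Hadj_sym _) (x := cp j1 o0 r0) (y := vv j1) (cc j1) (@conn1 _ _ (vv j1)));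
    [exact: cp_in | by rewrite !inE eqxx | by rewrite /= !eqxx].
- by exists a; rewrite // !inE aC.
- by exists b; rewrite // !inE bC orbT.
- have e1 : (j1 == j) = false by apply/negbTE.
  have e1' : (j == j1) = false by rewrite eq_sym e1.
  have e2 : (j2 == j) = false by apply/negbTE.
  have e2' : (j == j2) = false by rewrite eq_sym e2.
  move=> x y /HX [w ->].
  move=> /setUP [/setUP [/setUP [/setUP [/in_copyset [z ->]|/set1P ->]|/set1P ->]|/set1P ->]|/in_copyset [z ->]];
  apply/and3P; split; rewrite /= ?e1 ?e1' ?e2 ?e2' ?andbF //;
  apply/eqP; case=> //; move/eqP; rewrite ?e1 ?e1' ?e2 ?e2' //.
Qed.

End TreeLB.

Theorem lb_tree k : Q (@Hadj k.+1) k.+1 setT.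
Proof.
elim: k => [|k IH] s si.
  have [[[j1 j] j2] [n1 n2 n12 h1 h2]] := med3 (fun i => s (@cp 0 i o0 tt)).
  exists (s (@cp 0 j o0 tt)).
  apply: (@tree_core 0 s 0 _ j j1 j2 set0) => //.
  - exact: crit0.
  - by move=> x; rewrite inE.
  - exists (@cp 0 j1 o0 tt); first exact: cp_in.
    apply: lt_of_le_neq => //; by apply/eqP; case=> /eqP; rewrite (negbTE n1).
  - by exists (@cp 0 j2 o0 tt); first exact: cp_in.
have Qi i : Q (@Hadj k.+2) k.+1 (cp i o0 @: setT).
  apply: Q_imset IH; [exact: cp_inj | exact: Hadj_cp].
have [f Hf] := fin_all_exists (fun i => Qi i s si).
have [[[j1 j] j2] [n1 n2 n12 h1 h2]] := med3 f.
exists (f j).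
apply: (@tree_core k.+1 s k.+1 _ j j1 j2 _ n1 n2 (Hf j)).
- by move=> x /imsetP [w _ ->]; exists w.
- case: (crit_span (Hf j1)) => // a [b [aX _ sa _]].
  exists a => //; exact: leq_trans sa h1.
- case: (crit_span (Hf j2)) => // a [b [_ bX _ sb]].
  exists b => //; exact: leq_trans h2 sb.
Qed.

Section SqLB.
Variable k : nat.
Local Notation r0 := (Hroot k).

Lemma conn_copy_sq i j : conn (@sq k.+1) (copyset k i j).
Proof.
have H : forall x y : Hv k, Hadj x y -> sq (cp i j x) (cp i j y).
  by move=> x y h; apply: Hadj_sq; rewrite Hadj_cp.
exact: (conn_imset H (@conn_H k)).
Qed.

Lemma conn_group_sq i : conn (@sq k.+1) (groupset k i).
Proof.
rewrite /groupset.
have rt j : sq (vv i) (cp i j r0) by rewrite sq_vc !eqxx.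
apply: (connU (@sq_sym _) (x := vv i) (y := cp i o2 r0) _ (@conn_copy_sq i o2));
  [| by rewrite !inE eqxx | exact: cp_in | exact: rt].
apply: (connU (@sq_sym _) (x := vv i) (y := cp i o1 r0) _ (@conn_copy_sq i o1));
  [| by rewrite !inE eqxx | exact: cp_in | exact: rt].
apply: (connU (@sq_sym _) (x := vv i) (y := cp i o0 r0) _ (@conn_copy_sq i o0));
  [| by rewrite !inE eqxx | exact: cp_in | exact: rt].
exact: conn1.
Qed.

Lemma sq_core s m t (a b j1 j2 c d : 'I_3) (X : {set Hv k.+1}) :
  [&& j1 != b, j2 != b, j1 != j2, c != a, d != a & c != d] ->
  crit (@sq _) s m X t ->
  (forall x, x \in X -> exists2 w, x = cp a b w & w != r0) ->
  (exists2 x, x \in copyset k a j1 & s x < t) ->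
  (exists2 x, x \in copyset k a j2 & t <= s x) ->
  (exists2 x, x \in groupset k c :|: groupset k d & s x < t) ->
  (exists2 x, x \in groupset k c :|: groupset k d & t <= s x) ->
  crit (@sq _) s m.+2 [set x | x != uu] t.
Proof.
case/and5P=> n1 n2 n12 nc /andP [nd ncd] cX HX [y1 y1C hy1] [y2 y2C hy2] [z1 z1C hz1] [z2 z2C hz2].
set Y := copyset k a j1 :|: copyset k a j2.
set Z := groupset k c :|: groupset k d.
apply: (@crit_mono _ _ _ _ (X :|: Y :|: Z)).
  apply/subsetP => x; rewrite [x \in [set _ | _]]inE.
  case/setUP => [/setUP [/HX [w -> _]|/setUP [] /in_copyset [z ->]]|/setUP [] /in_groupset [->|[j [z ->]]]];
    by rewrite ?neq_cu ?neq_vu.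
apply: step1.
- apply: step1 cX _ _ _ _.
  + apply: (connU (@sq_sym _) (x := cp a j1 r0) (y := cp a j2 r0) (@conn_copy_sq a j1) (@conn_copy_sq a j2));
      [exact: cp_in | exact: cp_in |].
    by rewrite sq_cc eqxx (negbTE n12) !eqxx.
  + by exists y1; rewrite // inE y1C.
  + by exists y2; rewrite // inE y2C orbT.
  + have n1' : (b == j1) = false by rewrite eq_sym; apply/negbTE.
    have n2' : (b == j2) = false by rewrite eq_sym; apply/negbTE.
    move=> x y /HX [w -> nw] /setUP [] /in_copyset [z ->]; apply/and3P; split;
    rewrite ?sq_cc ?eqxx /= ?n1' ?n2' ?(negbTE n1) ?(negbTE n2) ?(negbTE nw) ?andbF //;
    apply/eqP; case=> /eqP; by rewrite ?n1' ?n2'.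
- apply: (connU (@sq_sym _) (x := vv c) (y := vv d) (@conn_group_sq c) (@conn_group_sq d));
    [by rewrite !inE eqxx | by rewrite !inE eqxx | by rewrite sq_vv].
- by exists z1.
- by exists z2.
- have ca : (c == a) = false by apply/negbTE.
  have ac : (a == c) = false by rewrite eq_sym ca.
  have da : (d == a) = false by apply/negbTE.
  have ad : (a == d) = false by rewrite eq_sym da.
  have Hxa x : x \in X :|: Y -> exists jj w, x = cp a jj w.
    case/setUP => [/HX [w -> _]|/setUP [] /in_copyset [z ->]]; by do 2 eexists.
  move=> x y /Hxa [jj [w ->]] /setUP [] /in_groupset [->|[j [z ->]]];
  apply/and3P; split;
  rewrite ?sq_cc ?sq_cv ?sq_vc ?ca ?ac ?da ?ad ?neq_cv //=;
  apply/eqP; case=> /eqP; by rewrite ?ca ?ac ?da ?ad.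
Qed.

End SqLB.

Theorem lb_sq k : Q (@sq k.+1) (2 * k.+1) [set x | x != Hroot k.+1].
Proof.
elim: k => [|k IH] s si.
  have [a [b [j1 [j2 [c [d [jc [jd [cond h1 h2 h3 h4]]]]]]]]] :=
    choose9 (fun i j => s (@cp 0 i j tt)).
  exists (s (@cp 0 a b tt)).
  have := (@sq_core 0 s 0 _ a b j1 j2 c d set0 cond (crit0 _ _ _)).
  case/and5P: cond => n1 n2 n12 nc /andP [nd ncd].
  apply.
  - by move=> x; rewrite inE.
  - exists (@cp 0 a j1 tt); first exact: cp_in.
    apply: (lt_of_le_neq si h1); apply/eqP; case=> /eqP; by rewrite (negbTE n1).
  - by exists (@cp 0 a j2 tt); first exact: cp_in.
  - exists (@cp 0 c jc tt); first by rewrite inE copy_groupset.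
    apply: (lt_of_le_neq si h3); apply/eqP; case=> /eqP; by rewrite (negbTE nc).
  - by exists (@cp 0 d jd tt); first by rewrite inE copy_groupset orbT.
have Qij (ij : 'I_3 * 'I_3) : Q (@sq k.+2) (2 * k.+1) (cp ij.1 ij.2 @: [set x | x != Hroot k.+1]).
  apply: Q_imset IH; [exact: cp_inj | exact: sq_cp].
have [f Hf] := fin_all_exists (fun ij => Qij ij s si).
have [a [b [j1 [j2 [c [d [jc [jd [cond h1 h2 h3 h4]]]]]]]]] :=
  choose9 (fun i j => f (i, j)).
exists (f (a, b)).
rewrite (_ : 2 * k.+2 = (2 * k.+1).+2); last lia.
apply: (@sq_core k.+1 s (2 * k.+1) _ a b j1 j2 c d _ cond (Hf (a, b))).
- move=> x /imsetP [w]; rewrite inE => nw ->; by exists w.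
- case: (crit_span (Hf (a, j1))) => // y [_ [/imsetP [w _ ->] _ sy _]].
  exists (cp a j1 w); [exact: cp_in | exact: leq_trans sy h1].
- case: (crit_span (Hf (a, j2))) => // y [z [_ /imsetP [w _ ->] _ sz]].
  exists (cp a j2 w); [exact: cp_in | exact: leq_trans h2 sz].
- case: (crit_span (Hf (c, jc))) => // y [_ [/imsetP [w _ ->] _ sy _]].
  exists (cp c jc w); [by rewrite inE copy_groupset | exact: leq_trans sy h3].
- case: (crit_span (Hf (d, jd))) => // y [z [_ /imsetP [w _ ->] _ sz]].
  exists (cp d jd w); [by rewrite inE copy_groupset orbT | exact: leq_trans h4 sz].
Qed.

Theorem mainTheorem4 (k : nat) :
  [/\ lmw (@Hadj k) = k,
      lmw (sq_graph (@Hadj k)) = (2 * k)%N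
    & lmw (del_vertex (sq_graph (@Hadj k)) (Hroot k)) = (2 * k)%N].
Proof.
case: k => [|k].
  split; apply/eqP; rewrite -leqn0.
  - exact: ub_lmw_tree.
  - exact: ub_lmw_sq.
  - exact: ub_lmw_del.
split; apply/eqP; rewrite eqn_leq.
- rewrite ub_lmw_tree /=. exact: (lmw_ge (ltn0Sn k) (@lb_tree k)).
- rewrite ub_lmw_sq /=. exact: (lmw_ge (m := 2 * k.+1) _ (@lb_sq k)).
- rewrite ub_lmw_del /=. apply: (lmw_ge_del (m := 2 * k.+1) _ (@lb_sq k)) => // x.
  by rewrite inE.
Qed.
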